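(* Consider the gossip dynamics with stubborn agents and block communication probabilities described in the context (with $0<n_{r1}\le n_1$, $0<n_{r2}\le n_2$, $n_{r1}+n_{r2}<n$, $w_s,w_d>0$, $w_s\neq w_d$, $w_s(n_1^2+n_2^2)+2w_dn_1n_2=1$, and fixed stubborn initial vector $\mathbf{x}^s=x^s(0)=[(\mathbf{x}^{s1})^T\ (\mathbf{x}^{s2})^T]^T$, where $\mathbf{x}^{sk}$ stacks the states of stubborn agents of community $k$). Then, with $a_i=w_sn_i+w_dn_{3-i}$ for $i=1,2$, there exist constants $\tilde w_{s1},\tilde w_{s2},\tilde w_d$ depending only on $w_s,w_d,n_{r1},n_{r2}$ such that $$(I-\bar A)^{-1}=\begin{bmatrix}\frac1{a_1}(I_{n_{r1}}-\tilde w_{s1}\mathbf{1}_{n_{r1}}\mathbf{1}_{n_{r1}}^T) & \tilde w_d\mathbf{1}_{n_{r1}}\mathbf{1}_{n_{r2}}^T\\ \tilde w_d\mathbf{1}_{n_{r2}}\mathbf{1}_{n_{r1}}^T & \frac1{a_2}(I_{n_{r2}}-\tilde w_{s2}\mathbf{1}_{n_{r2}}\mathbf{1}_{n_{r2}}^T)\end{bmatrix}$$ (block decomposition by regular agents of community 1, then community 2). Consequently $$\mathbf{x}^r:=(I-\bar A)^{-1}\bar B\mathbf{x}^s=[\chi_1\mathbf{1}_{n_{r1}}^T,\ \chi_2\mathbf{1}_{n_{r2}}^T]^T,$$ where $$\chi_1=\tfrac1\delta(\gamma_{11}\mathbf{1}_{n_{s1}}^T\mathbf{x}^{s1}+\gamma_{12}\mathbf{1}_{n_{s2}}^T\mathbf{x}^{s2}),\qquad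 \chi_2=\tfrac1\delta(\gamma_{21}\mathbf{1}_{n_{s2}}^T\mathbf{x}^{s2}+\gamma_{22}\mathbf{1}_{n_{s1}}^T\mathbf{x}^{s1}),$$ with $\gamma_{11}=w_sw_dn_1+w_d^2n_{r2}+w_s^2n_{s2}$, $\gamma_{12}=w_d(w_dn_1+w_sn_2)$, $\gamma_{21}=w_sw_dn_2+w_d^2n_{r1}+w_s^2n_{s1}$, $\gamma_{22}=w_d(w_dn_2+w_sn_1)$, $\delta=w_s^2n_{s1}n_{s2}+w_sw_d(n_1n_{s1}+n_2n_{s2})+w_d^2(n_1n_2-n_{r1}n_{r2})$, and $\mathbf{1}_{n_{sk}}^T\mathbf{x}^{sk}$ is defined to be $0$ if $n_{sk}=0$.
   Context: Agents $\mathcal{V}=\{1,\dots,n\}$, $n=n_1+n_2$, form two communities $\mathcal{V}_1=\{1,\dots,n_1\}$, $\mathcal{V}_2=\{n_1+1,\dots,n\}$; community $k$ consists of $n_{rk}$ regular agents $\mathcal{V}_{rk}$ and $n_{sk}=n_k-n_{rk}$ stubborn agents $\mathcal{V}_{sk}$; $\mathcal{V}_r=\mathcal{V}_{r1}\cup\mathcal{V}_{r2}$, $\mathcal{V}_s=\mathcal{V}_{s1}\cup\mathcal{V}_{s2}$. Let $w_{ij}=w_s$ if $i,j$ are in the same community and $w_{ij}=w_d$ otherwise. For $i,j\in\mathcal{V}$ define $R^{ij}=I-\frac12(\mathbf{e}_i-\mathbf{e}_j)(\mathbf{e}_i-\mathbf{e}_j)^T$ if $i,j\in\mathcal{V}_r$;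 $R^{ij}=I-\frac12\mathbf{e}_i(\mathbf{e}_i-\mathbf{e}_j)^T$ if $i\in\mathcal{V}_r,j\in\mathcal{V}_s$; $R^{ij}=I-\frac12\mathbf{e}_j(\mathbf{e}_j-\mathbf{e}_i)^T$ if $i\in\mathcal{V}_s,j\in\mathcal{V}_r$; $R^{ij}=I$ if $i,j\in\mathcal{V}_s$. At each time $t\in\mathbb{N}$, independently, an ordered pair $(i,j)$ is drawn with probability $w_{ij}$ and $R(t)=R^{ij}$; states evolve by $x(t+1)=R(t)x(t)$. With $x^r(t)$, $x^s(t)$ the stacked states of regular and stubborn agents, $x^r(t+1)=A(t)x^r(t)+B(t)x^s(t)$, where $(A(t)\ B(t))$ are the rows of $R(t)$ indexed by regular agents, columns split into regular ($A(t)$) and stubborn ($B(t)$) agents. $\bar A=\mathbb{E}\{A(t)\}$, $\bar B=\mathbb{E}\{B(t)\}$. *)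

(* Defs.v *)
From HB Require Import structures.
From mathcomp Require Import all_boot all_order all_algebra.
Import GRing.Theory Num.Theory.
Local Open Scope ring_scope.

(* Agents are indexed by 'I_((nr1 + ns1) + (nr2 + ns2)):
   community 1 = the first n1 = nr1 + ns1 indices, community 2 the last
   n2 = nr2 + ns2 indices; inside community k the regular agents come first,
   then the stubborn ones. *)

Definition is_reg (nr1 ns1 nr2 ns2 : nat) (i : 'I_((nr1 + ns1) + (nr2 + ns2))) : bool :=
  match split i with inl a => (a < nr1)%N | inr b => (b < nr2)%N end.

Definition same_comm (nr1 ns1 nr2 ns2 : nat) (i j : 'I_((nr1 + ns1) + (nr2 + ns2))) : bool :=
  (i < nr1 + ns1)%N == (j < nr1 + ns1)%N.

Definition wgt (R : pzRingType) (nr1 ns1 nr2 ns2 : nat) (ws wd : R)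
    (i j : 'I_((nr1 + ns1) + (nr2 + ns2))) : R :=
  if same_comm nr1 ns1 nr2 ns2 i j then ws else wd.

Definition evec (R : pzRingType) (n : nat) (i : 'I_n) : 'cV[R]_n := delta_mx i 0.

Definition Rmat (R : fieldType) (nr1 ns1 nr2 ns2 : nat)
    (i j : 'I_((nr1 + ns1) + (nr2 + ns2))) : 'M[R]_((nr1 + ns1) + (nr2 + ns2)) :=
  let ri := is_reg nr1 ns1 nr2 ns2 i in
  let rj := is_reg nr1 ns1 nr2 ns2 j in
  let ei := @evec R _ i in
  let ej := @evec R _ j in
  if ri && rj then 1%:M - 2^-1 *: ((ei - ej) *m (ei - ej)^T)
  else if ri && ~~ rj then 1%:M - 2^-1 *: (ei *m (ei - ej)^T)
  else if ~~ ri && rj then 1%:M - 2^-1 *: (ej *m (ej - ei)^T)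
  else 1%:M.

Definition reg_idx (nr1 ns1 nr2 ns2 : nat) (k : 'I_(nr1 + nr2)) :
    'I_((nr1 + ns1) + (nr2 + ns2)) :=
  match split k with
  | inl a => lshift (nr2 + ns2) (lshift ns1 a)
  | inr b => rshift (nr1 + ns1) (lshift ns2 b)
  end.

Definition stub_idx (nr1 ns1 nr2 ns2 : nat) (k : 'I_(ns1 + ns2)) :
    'I_((nr1 + ns1) + (nr2 + ns2)) :=
  match split k with
  | inl a => lshift (nr2 + ns2) (rshift nr1 a)
  | inr b => rshift (nr1 + ns1) (rshift nr2 b)
  end.

Definition Apart (R : pzRingType) (nr1 ns1 nr2 ns2 : nat)
    (M : 'M[R]_((nr1 + ns1) + (nr2 + ns2))) : 'M[R]_(nr1 + nr2) :=
  \matrix_(k, l) M (reg_idx nr1 ns1 nr2 ns2 k) (reg_idx nr1 ns1 nr2 ns2 l).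

Definition Bpart (R : pzRingType) (nr1 ns1 nr2 ns2 : nat)
    (M : 'M[R]_((nr1 + ns1) + (nr2 + ns2))) : 'M[R]_(nr1 + nr2, ns1 + ns2) :=
  \matrix_(k, l) M (reg_idx nr1 ns1 nr2 ns2 k) (stub_idx nr1 ns1 nr2 ns2 l).

(* expectations: the pair (i,j) is drawn with probability w_ij *)
Definition Abar (R : fieldType) (nr1 ns1 nr2 ns2 : nat) (ws wd : R) : 'M[R]_(nr1 + nr2) :=
  \sum_(i : 'I_((nr1 + ns1) + (nr2 + ns2))) \sum_(j : 'I_((nr1 + ns1) + (nr2 + ns2)))
     wgt R nr1 ns1 nr2 ns2 ws wd i j *: Apart R nr1 ns1 nr2 ns2 (Rmat R nr1 ns1 nr2 ns2 i j).

Definition Bbar (R : fieldType) (nr1 ns1 nr2 ns2 : nat) (ws wd : R) :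
    'M[R]_(nr1 + nr2, ns1 + ns2) :=
  \sum_(i : 'I_((nr1 + ns1) + (nr2 + ns2))) \sum_(j : 'I_((nr1 + ns1) + (nr2 + ns2)))
     wgt R nr1 ns1 nr2 ns2 ws wd i j *: Bpart R nr1 ns1 nr2 ns2 (Rmat R nr1 ns1 nr2 ns2 i j).

(* Main.v *)
Require Import Defs.
From HB Require Import structures.
From mathcomp Require Import all_boot all_order all_algebra.
From mathcomp Require Import ring lra zify.
Import Order.TTheory GRing.Theory Num.Theory.
Local Open Scope ring_scope.


Lemma split_l m n (j : 'I_m) : split (lshift n j) = inl j.
Proof. exact: (unsplitK (inl _ j)). Qed.
Lemma split_r m n (j : 'I_n) : split (rshift m j) = inr j.
Proof. exact: (unsplitK (inr _ j)). Qed.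

Lemma sum_delta (R : pzRingType) (I : finType) (x : I) (F : I -> R) :
  \sum_i (x == i)%:R * F i = F x.
Proof.
rewrite (bigD1 x) //= eqxx mul1r big1 ?addr0 // => i /negbTE.
by rewrite eq_sym => ->; rewrite mul0r.
Qed.

Lemma sum3 (R : comPzRingType) (I : finType) (F : I -> R) a b c (x y : I) :
  \sum_j (a * F j + b * ((x == j)%:R * F j) + c * ((y == j)%:R * F j)) =
  a * \sum_j F j + b * F x + c * F y.
Proof. by rewrite !big_split /= -!mulr_sumr !sum_delta. Qed.

Lemma sum4 (R : comPzRingType) (I : finType) (F G1 G2 H : I -> R) a b (x y : I) :
  \sum_i (a * F i + (x == i)%:R * G1 i + (y == i)%:R * G2 i + b * H i) =
  a * \sum_i F i + G1 x + G2 y + b * \sum_i H i.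
Proof. by rewrite !big_split /= -!mulr_sumr !sum_delta. Qed.

Lemma mul_const (R : pzRingType) m k n (a b : R) :
  (const_mx a : 'M_(m, k)) *m (const_mx b : 'M_(k, n)) = const_mx (a * b * k%:R).
Proof.
apply/matrixP => i j; rewrite !mxE.
under eq_bigr do rewrite !mxE.
by rewrite sumr_const card_ord mulr_natr.
Qed.

Lemma mul_Pc (R : comPzRingType) m n (al be c : R) :
  (al%:M + const_mx be : 'M_m) *m (const_mx c : 'M_(m, n)) = const_mx (al * c + be * c * m%:R).
Proof.
rewrite mulmxDl mul_scalar_mx mul_const; apply/matrixP => i j; rewrite !mxE //.
Qed.

Lemma mul_cP (R : comPzRingType) m n (al be c : R) :
  (const_mx c : 'M_(m, n)) *m (al%:M + const_mx be : 'M_n) = const_mx (c * al + c * be * n%:R).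
Proof.
rewrite mulmxDr mul_mx_scalar mul_const; apply/matrixP => i j; rewrite !mxE.
by rewrite mulrC.
Qed.

Lemma mul_PP (R : comPzRingType) n (al be ga de : R) :
  (al%:M + const_mx be : 'M_n) *m (ga%:M + const_mx de) =
   (al * ga)%:M + const_mx (al * de + be * ga + be * de * n%:R).
Proof.
rewrite mulmxDr mul_Pc mul_mx_scalar; apply/matrixP => i j; rewrite !mxE.
ring.
Qed.

Lemma mul_cv (R : comPzRingType) m k (c : R) (v : 'cV[R]_k) :
  (const_mx c : 'M_(m, k)) *m v = const_mx (c * \sum_l v l 0).
Proof.
apply/matrixP => i j; rewrite !mxE mulr_sumr; apply: eq_bigr => l _.
by rewrite mxE (ord1 j).
Qed.
Lemma Rmat_reg (R : fieldType) nr1 ns1 nr2 ns2 (i j p q : 'I_((nr1 + ns1) + (nr2 + ns2))) :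
  is_reg nr1 ns1 nr2 ns2 p ->
  Rmat R nr1 ns1 nr2 ns2 i j p q =
  (p == q)%:R - 2^-1 * (((p == i)%:R - (p == j)%:R) * ((q == i)%:R - (q == j)%:R)).
Proof.
move=> rp.
have ne x : ~~ is_reg nr1 ns1 nr2 ns2 x -> (p == x) = false.
  by move=> nx; apply/eqP => px; move: nx; rewrite -px rp.
rewrite /Rmat /evec.
case ri: (is_reg _ _ _ _ i); case rj: (is_reg _ _ _ _ j) => /=;
  rewrite !mxE ?big_ord1 ?mxE ?eqxx ?andbT /=.
- by [].
- rewrite (ne j) ?rj //=; ring.
- rewrite (ne i) ?ri //=; ring.
- rewrite (ne i) ?ri // (ne j) ?rj //=; ring.
Qed.

Lemma wgt_sym (R : pzRingType) nr1 ns1 nr2 ns2 (ws wd : R) i j :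
  wgt R nr1 ns1 nr2 ns2 ws wd i j = wgt R nr1 ns1 nr2 ns2 ws wd j i.
Proof. by rewrite /wgt /same_comm eq_sym. Qed.

Lemma wgt_row (R : pzRingType) nr1 ns1 nr2 ns2 (ws wd : R) i :
  \sum_j wgt R nr1 ns1 nr2 ns2 ws wd i j =
  if (i < nr1 + ns1)%N then ws * (nr1 + ns1)%:R + wd * (nr2 + ns2)%:R
  else ws * (nr2 + ns2)%:R + wd * (nr1 + ns1)%:R.
Proof.
rewrite big_split_ord /= /wgt /same_comm.
have hl (j : 'I_(nr1 + ns1)) : (lshift (nr2 + ns2) j < nr1 + ns1)%N by rewrite /= ltn_ord.
have hr (j : 'I_(nr2 + ns2)) : (rshift (nr1 + ns1) j < nr1 + ns1)%N = false.
  by rewrite /= ltnNge leq_addr.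
under eq_bigr do rewrite hl.
under [X in _ + X]eq_bigr do rewrite hr.
case: (i < _)%N => /=; rewrite !sumr_const !card_ord !mulr_natr //.
by rewrite addrC.
Qed.

Lemma wgt_tot (R : comPzRingType) nr1 ns1 nr2 ns2 (ws wd : R) :
  \sum_i \sum_j wgt R nr1 ns1 nr2 ns2 ws wd i j =
  ws * ((nr1 + ns1)%:R ^+ 2 + (nr2 + ns2)%:R ^+ 2) + 2 * wd * (nr1 + ns1)%:R * (nr2 + ns2)%:R.
Proof.
under eq_bigr do rewrite wgt_row.
rewrite big_split_ord /=.
have hl (j : 'I_(nr1 + ns1)) : (lshift (nr2 + ns2) j < nr1 + ns1)%N by rewrite /= ltn_ord.
have hr (j : 'I_(nr2 + ns2)) : (rshift (nr1 + ns1) j < nr1 + ns1)%N = false.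
  by rewrite /= ltnNge leq_addr.
under eq_bigr do rewrite hl.
under [X in _ + X]eq_bigr do rewrite hr.
rewrite !sumr_const !card_ord.
ring.
Qed.

Lemma Esum (R : fieldType) nr1 ns1 nr2 ns2 (ws wd : R) p q :
  (2 : R) != 0 -> is_reg nr1 ns1 nr2 ns2 p ->
  \sum_i \sum_j wgt R nr1 ns1 nr2 ns2 ws wd i j * Rmat R nr1 ns1 nr2 ns2 i j p q =
  (p == q)%:R * (\sum_i \sum_j wgt R nr1 ns1 nr2 ns2 ws wd i j
                 - \sum_j wgt R nr1 ns1 nr2 ns2 ws wd p j)
  + wgt R nr1 ns1 nr2 ns2 ws wd p q.
Proof.
move=> h2 rp.
set w := wgt R nr1 ns1 nr2 ns2 ws wd.
have inner i : \sum_j w i j * Rmat R nr1 ns1 nr2 ns2 i j p q =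
  ((p == q)%:R - 2^-1 * ((p == i)%:R * (q == i)%:R)) * \sum_j w i j
  + (2^-1 * (p == i)%:R) * w i q + (2^-1 * ((q == i)%:R - (p == q)%:R)) * w i p.
  rewrite -sum3; apply: eq_bigr => j _; rewrite Rmat_reg //.
  have E : (p == j)%:R * (q == j)%:R = (p == q)%:R * (p == j)%:R :> R.
    case: (eqVneq p j) => [->|_]; rewrite ?mul0r ?mulr0 //.
    by rewrite ?eqxx ?mul1r ?mulr1 eq_sym.
  rewrite (_ : ((p == i)%:R - (p == j)%:R) * ((q == i)%:R - (q == j)%:R) =
     (p == i)%:R * (q == i)%:R - (p == i)%:R * (q == j)%:R - (p == j)%:R * (q == i)%:R
     + (p == q)%:R * (p == j)%:R :> R); first by ring.
  by rewrite -E; ring.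
under eq_bigr do rewrite inner.
rewrite (eq_bigr (fun i => (p == q)%:R * (\sum_j w i j)
    + (p == i)%:R * (- 2^-1 * ((q == i)%:R * \sum_j w i j) + 2^-1 * w i q)
    + (q == i)%:R * (2^-1 * w i p) + (- 2^-1 * (p == q)%:R) * w i p)); last first.
  by move=> i _; move: (\sum_j w i j) => S; clearbody w; ring.
rewrite sum4.
have -> : \sum_i w i p = \sum_j w p j by apply: eq_bigr => i _; rewrite /w wgt_sym.
have Hs : w q p = w p q by apply: wgt_sym.
rewrite Hs [q == p]eq_sym.
move: (\sum_i \sum_j w i j) (\sum_j w p j) => S1 S2; by field.
Qed.

Lemma val_reg_l nr1 ns1 nr2 ns2 (a : 'I_nr1) : val (reg_idx nr1 ns1 nr2 ns2 (lshift nr2 a)) = val a.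
Proof. by rewrite /reg_idx split_l. Qed.
Lemma val_reg_r nr1 ns1 nr2 ns2 (a : 'I_nr2) : val (reg_idx nr1 ns1 nr2 ns2 (rshift nr1 a)) = (nr1 + ns1 + a)%N.
Proof. by rewrite /reg_idx split_r. Qed.
Lemma val_stub_l nr1 ns1 nr2 ns2 (a : 'I_ns1) : val (stub_idx nr1 ns1 nr2 ns2 (lshift ns2 a)) = (nr1 + a)%N.
Proof. by rewrite /stub_idx split_l. Qed.
Lemma val_stub_r nr1 ns1 nr2 ns2 (a : 'I_ns2) : val (stub_idx nr1 ns1 nr2 ns2 (rshift ns1 a)) = (nr1 + ns1 + (nr2 + a))%N.
Proof. by rewrite /stub_idx split_r. Qed.
Lemma reg_RI nr1 ns1 nr2 ns2 k : is_reg nr1 ns1 nr2 ns2 (reg_idx nr1 ns1 nr2 ns2 k).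
Proof. by rewrite /reg_idx; case: (split k) => a; rewrite /is_reg ?split_l ?split_r /= ltn_ord. Qed.

Lemma addn_ltF m x : (m + x < m)%N = false.
Proof. by rewrite ltnNge leq_addr. Qed.
Lemma eqF1 x m y : (x < m)%N -> (x == m + y)%N = false.
Proof. by move=> h; apply/eqP => e; move: h; rewrite e ltnNge leq_addr. Qed.
Lemma eqF2 x m y : (x < m)%N -> (m + y == x)%N = false.
Proof. by move=> h; rewrite eq_sym eqF1. Qed.
Lemma ltn_ordl m n (a : 'I_m) : (a < m + n)%N.
Proof. exact: ltn_addr (ltn_ord a). Qed.

Lemma Abar_E (R : fieldType) nr1 ns1 nr2 ns2 (ws wd : R) k l :
  Abar R nr1 ns1 nr2 ns2 ws wd k l = \sum_i \sum_j wgt R nr1 ns1 nr2 ns2 ws wd i j *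
     Rmat R nr1 ns1 nr2 ns2 i j (reg_idx nr1 ns1 nr2 ns2 k) (reg_idx nr1 ns1 nr2 ns2 l).
Proof.
rewrite /Abar summxE; apply: eq_bigr => i _; rewrite summxE; apply: eq_bigr => j _.
by rewrite !mxE.
Qed.

Lemma Bbar_E (R : fieldType) nr1 ns1 nr2 ns2 (ws wd : R) k l :
  Bbar R nr1 ns1 nr2 ns2 ws wd k l = \sum_i \sum_j wgt R nr1 ns1 nr2 ns2 ws wd i j *
     Rmat R nr1 ns1 nr2 ns2 i j (reg_idx nr1 ns1 nr2 ns2 k) (stub_idx nr1 ns1 nr2 ns2 l).
Proof.
rewrite /Bbar summxE; apply: eq_bigr => i _; rewrite summxE; apply: eq_bigr => j _.
by rewrite !mxE.
Qed.

Lemma IA_block (R : fieldType) nr1 ns1 nr2 ns2 (ws wd : R) :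
  (2 : R) != 0 ->
  ws * ((nr1 + ns1)%:R ^+ 2 + (nr2 + ns2)%:R ^+ 2) + 2 * wd * (nr1 + ns1)%:R * (nr2 + ns2)%:R = 1 ->
  1%:M - Abar R nr1 ns1 nr2 ns2 ws wd =
  block_mx ((ws * (nr1 + ns1)%:R + wd * (nr2 + ns2)%:R)%:M + const_mx (- ws))
           (const_mx (- wd)) (const_mx (- wd))
           ((ws * (nr2 + ns2)%:R + wd * (nr1 + ns1)%:R)%:M + const_mx (- ws)).
Proof.
move=> h2 htot.
apply/matrixP => k l; rewrite -(splitK k) -(splitK l).
case: (split k) => a; case: (split l) => b /=;
  rewrite ?block_mxEul ?block_mxEur ?block_mxEdl ?block_mxEdr.
all: rewrite !mxE Abar_E Esum ?reg_RI // wgt_tot htot wgt_row /wgt /same_comm.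
all: rewrite -!val_eqE /= ?val_reg_l ?val_reg_r.
- rewrite ltn_ordl ltn_ordl eqxx.
  case: (eqVneq a b) => [->|nab]; rewrite ?eqxx /= ?mulr0n ?mulr1n; first ring.
  have h : (val a == val b) = false by rewrite val_eqE (negbTE nab).
  rewrite !h /= ?mulr0n ?mulr1n; ring.
- rewrite ltn_ordl addn_ltF (eqF1 _ _ _ (ltn_ord a)) (eqF1 _ _ _ (ltn_ordl _ ns1 a)) /=.
  rewrite ?mulr0n ?mulr1n; ring.
- rewrite ltn_ordl addn_ltF (eqF2 _ _ _ (ltn_ord b)) (eqF2 _ _ _ (ltn_ordl _ ns1 b)) /=.
  rewrite ?mulr0n ?mulr1n; ring.
- rewrite !addn_ltF !eqn_add2l ?eqxx.
  case: (eqVneq a b) => [->|nab]; rewrite ?eqxx /= ?mulr0n ?mulr1n; first ring.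
  have h : (val a == val b) = false by rewrite val_eqE (negbTE nab).
  rewrite !h /= ?mulr0n ?mulr1n; ring.
Qed.

Lemma B_block (R : fieldType) nr1 ns1 nr2 ns2 (ws wd : R) :
  (2 : R) != 0 ->
  Bbar R nr1 ns1 nr2 ns2 ws wd =
  block_mx (const_mx ws) (const_mx wd) (const_mx wd) (const_mx ws).
Proof.
move=> h2.
apply/matrixP => k l; rewrite -(splitK k) -(splitK l).
case: (split k) => a; case: (split l) => b /=;
  rewrite ?block_mxEul ?block_mxEur ?block_mxEdl ?block_mxEdr.
all: rewrite !mxE Bbar_E Esum ?reg_RI // /wgt /same_comm.
all: rewrite -!val_eqE /= ?val_reg_l ?val_reg_r ?val_stub_l ?val_stub_r.
- have hb1 : (nr1 + b < nr1 + ns1)%N by rewrite ltn_add2l ltn_ord.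
  by rewrite (eqF1 _ _ _ (ltn_ord a)) mulr0n mul0r add0r ltn_ordl hb1.
- by rewrite (eqF1 _ _ _ (ltn_ordl _ ns1 a)) mulr0n mul0r add0r ltn_ordl addn_ltF.
- have hb1 : (nr1 + b < nr1 + ns1)%N by rewrite ltn_add2l ltn_ord.
  by rewrite (eqF2 _ _ _ hb1) mulr0n mul0r add0r addn_ltF hb1.
- by rewrite eqn_add2l (eqF1 _ _ _ (ltn_ord a)) mulr0n mul0r add0r !addn_ltF.
Qed.

Lemma Pform (R : comPzRingType) n (c t : R) :
  c *: (1%:M - t *: const_mx 1) = c%:M + const_mx (- (c * t)) :> 'M_n.
Proof. apply/matrixP => i j; rewrite !mxE; case: (i == j) => /=; ring. Qed.

Lemma addcc (R : pzRingType) m n (x y : R) :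
  const_mx x + const_mx y = const_mx (x + y) :> 'M_(m, n).
Proof. by apply/matrixP => i j; rewrite !mxE. Qed.

Lemma addPc (R : pzRingType) n (al x y : R) :
  al%:M + const_mx x + const_mx y = al%:M + const_mx (x + y) :> 'M_n.
Proof. by rewrite -addrA addcc. Qed.

Lemma P_eq1 (R : pzRingType) n (al x : R) :
  al = 1 -> x = 0 -> al%:M + const_mx x = 1%:M :> 'M_n.
Proof. by move=> -> ->; apply/matrixP => i j; rewrite !mxE addr0. Qed.

Lemma c_eq0 (R : pzRingType) m n (x : R) :
  x = 0 -> const_mx x = 0 :> 'M_(m, n).
Proof. by move=> ->; apply/matrixP => i j; rewrite !mxE. Qed.

Lemma nat_fact1 nr1 ns1 nr2 ns2 : (nr1 + nr2 < nr1 + ns1 + (nr2 + ns2))%N -> (0 < ns1 + ns2)%N.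
Proof. lia. Qed.
Lemma nat_fact2 nr1 ns1 nr2 ns2 : (0 < ns1 + ns2)%N ->
  (0 < (nr1 + ns1) * ns1 + (nr2 + ns2) * ns2)%N.
Proof. by case: ns1 => [|k]; case: ns2 => [|l]; rewrite ?addn0 ?add0n ?muln0 ?addn0 //= ?addn_gt0 ?muln_gt0 ?addn_gt0 /= ?orbT. Qed.

Theorem theorem3 (R : realFieldType) (nr1 ns1 nr2 ns2 : nat) (ws wd : R)
    (xs : 'cV[R]_(ns1 + ns2)) :
  let n1 := (nr1 + ns1)%N in
  let n2 := (nr2 + ns2)%N in
  let a1 := ws * n1%:R + wd * n2%:R in
  let a2 := ws * n2%:R + wd * n1%:R in
  let Ab := Abar R nr1 ns1 nr2 ns2 ws wd in
  let Bb := Bbar R nr1 ns1 nr2 ns2 ws wd in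
  let sx1 := \sum_(k < ns1) xs (lshift ns2 k) 0 in
  let sx2 := \sum_(k < ns2) xs (rshift ns1 k) 0 in
  let g11 := ws * wd * n1%:R + wd ^+ 2 * nr2%:R + ws ^+ 2 * ns2%:R in
  let g12 := wd * (wd * n1%:R + ws * n2%:R) in
  let g21 := ws * wd * n2%:R + wd ^+ 2 * nr1%:R + ws ^+ 2 * ns1%:R in
  let g22 := wd * (wd * n2%:R + ws * n1%:R) in
  let delta := ws ^+ 2 * ns1%:R * ns2%:R
               + ws * wd * (n1%:R * ns1%:R + n2%:R * ns2%:R)
               + wd ^+ 2 * (n1%:R * n2%:R - nr1%:R * nr2%:R) in
  let chi1 := delta^-1 * (g11 * sx1 + g12 * sx2) in
  let chi2 := delta^-1 * (g21 * sx2 + g22 * sx1) in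
  (0 < nr1)%N -> (0 < nr2)%N -> (nr1 + nr2 < n1 + n2)%N ->
  0 < ws -> 0 < wd -> ws != wd ->
  ws * (n1%:R ^+ 2 + n2%:R ^+ 2) + 2 * wd * n1%:R * n2%:R = 1 ->
  (exists wt1 wt2 wtd : R,
     (1%:M - Ab) \in unitmx /\
     invmx (1%:M - Ab) =
       block_mx (a1^-1 *: (1%:M - wt1 *: const_mx 1)) (const_mx wtd)
                (const_mx wtd) (a2^-1 *: (1%:M - wt2 *: const_mx 1)))
  /\ invmx (1%:M - Ab) *m Bb *m xs =
     col_mx (const_mx chi1 : 'cV[R]_nr1) (const_mx chi2 : 'cV[R]_nr2).
Proof.
move=> n1 n2 a1 a2 Ab Bb sx1 sx2 g11 g12 g21 g22 delta chi1 chi2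
  hr1 hr2 hlt hws hwd hne htot.
have h2 : (2 : R) != 0 by rewrite pnatr_eq0.
have hs : (0 < ns1 + ns2)%N by exact: nat_fact1 hlt.
have hdel : 0 < delta.
  have P1 : 0 <= ws ^+ 2 * ns1%:R * ns2%:R by apply: mulr_ge0; [apply: mulr_ge0; [apply: sqr_ge0|] |]; apply: ler0n.
  have hN : (0 < n1 * ns1 + n2 * ns2)%N by exact: nat_fact2.
  have P2 : 0 < ws * wd * (n1%:R * ns1%:R + n2%:R * ns2%:R).
    by rewrite -!natrM -natrD; apply: mulr_gt0; [exact: mulr_gt0|]; rewrite ltr0n.
  have P3 : 0 <= wd ^+ 2 * (n1%:R * n2%:R - nr1%:R * nr2%:R).
    rewrite (_ : n1%:R * n2%:R - nr1%:R * nr2%:R = (nr1 * ns2 + ns1 * nr2 + ns1 * ns2)%:R :> R).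
      by apply: mulr_ge0; [apply: sqr_ge0|apply: ler0n].
    by rewrite /n1 /n2 !natrD !natrM; ring.
  rewrite /delta; lra.
have ha1 : 0 < a1.
  have : 0 < ws * n1%:R by apply: mulr_gt0 => //; rewrite ltr0n /n1 ltn_addr.
  have : 0 <= wd * n2%:R by apply: mulr_ge0; [apply: ltW|apply: ler0n].
  rewrite /a1; lra.
have ha2 : 0 < a2.
  have : 0 < ws * n2%:R by apply: mulr_gt0 => //; rewrite ltr0n /n2 ltn_addr.
  have : 0 <= wd * n1%:R by apply: mulr_ge0; [apply: ltW|apply: ler0n].
  rewrite /a2; lra.
have hd0 : delta != 0 by rewrite gt_eqF.
have ha10 : a1 != 0 by rewrite gt_eqF.
have ha20 : a2 != 0 by rewrite gt_eqF.
pose wt1 := - (ws * (ws * ns2%:R + wd * n1%:R) + wd ^+ 2 * nr2%:R) / delta.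
pose wt2 := - (ws * (ws * ns1%:R + wd * n2%:R) + wd ^+ 2 * nr1%:R) / delta.
pose wtd := wd / delta.
pose X := block_mx (a1^-1 *: (1%:M - wt1 *: const_mx 1)) (const_mx wtd)
                (const_mx wtd) (a2^-1 *: (1%:M - wt2 *: const_mx 1)) : 'M[R]_(nr1 + nr2).
have HX : (1%:M - Ab) *m X = 1%:M.
  rewrite /Ab IA_block // /X !Pform mulmx_block !mul_PP !mul_Pc !mul_cP !mul_const.
  rewrite !addPc !addcc [RHS]scalar_mx_block.
  congr block_mx; [apply: P_eq1 | apply: c_eq0 | apply: c_eq0 | rewrite addrC addPc; apply: P_eq1];
  rewrite ?/wt1 ?/wt2 ?/wtd; move: ha10 ha20 hd0; rewrite ?/a1 ?/a2 ?/delta ?/n1 ?/n2 => ha10 ha20 hd0; field;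
  rewrite !natrD in ha10 ha20 hd0; by rewrite ?ha10 ?ha20 ?hd0.
have [Hu _] := mulmx1_unit HX.
have Hinv : invmx (1%:M - Ab) = X.
  by have := congr1 (mulmx (invmx (1%:M - Ab))) HX; rewrite mulmxA mulVmx // mul1mx mulmx1.
split; first by exists wt1, wt2, wtd.
rewrite Hinv /Bb B_block // -mulmxA -[xs]vsubmxK mul_block_col !mul_cv.
have -> : \sum_l usubmx xs l 0 = sx1 by apply: eq_bigr => l _; rewrite mxE.
have -> : \sum_l dsubmx xs l 0 = sx2 by apply: eq_bigr => l _; rewrite mxE.
rewrite !addcc /X Pform Pform mul_block_col !mul_Pc !mul_const !addcc.
move: ha10 ha20 hd0; rewrite /chi1 /chi2 /g11 /g12 /g21 /g22 /wt1 /wt2 /wtd /a1 /a2 /delta /n1 /n2 => ha10 ha20 hd0.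
congr (col_mx (const_mx _) (const_mx _)); field;
  rewrite !natrD in ha10 ha20 hd0; by rewrite ?ha10 ?ha20 ?hd0.
Qed.
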